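(* Let $a,b$ be distinct assertion variables. The implication $$(1\hookrightarrow\_)\wedge(a*b)\ \Rightarrow\ \big((1\hookrightarrow\_)*a\big)\vee\big((1\hookrightarrow\_)*b\big)$$ holds in the unary interpretation (for every $\eta$ and every $\rho:\mathsf{AVar}\to\mathsf{IRel}_1$, the meaning of the left side is contained in that of the right side), but fails in the binary interpretation: with $\rho(a)=\{([1],[])\}^\uparrow$ and $\rho(b)=\{([],[1])\}^\uparrow$, the pair $([1],[1])$ belongs to the binary meaning of the left side while both disjuncts on the right have empty binary meaning.
   Context: $\mathsf{Heap}$: finite partial functions $\mathsf{PosInt}\to\mathsf{Int}$; $[]$ the empty heap; $[m]$ the heap storing $0$ at location $m$ and nothing else; $g\sqsubseteq h$ means $h$ extends $g$; $h\cdot g$ union of disjoint heaps; componentwise on $\mathsf{Heap}^n$; $S^\uparrow$ is the upward closure of a set $S$ of tuples. $\mathsf{IRel}_n$: upward closed subsets of $\mathsf{Heap}^n$; $p*q=\{\mathbf f\cdot\mathbf g\mid\mathbf f\in p,\mathbf g\in q,\text{componentwise disjoint}\}$; $\Delta_n(X)=\{(h_1,\dots,h_n)\mid\exists f\in X.\ \forall k.\ f\sqsubseteq h_k\}$ for $X\subseteq\mathsf{Heap}$. Assertion semantics with $\eta$ (ordinary variables to integers) and $\rho:\mathsf{AVar}\to\mathsf{IRel}_n$: primitive assertions $P$ mean $\Delta_n$ of their standard set of heaps, variables $a$ mean $\rho(a)$, $\wedge,\vee,*$ mean $\cap,\cup,*$, $\exists$ means union over integer values. $1\hookrightarrow\_$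 abbreviates $\exists y.\,1\hookrightarrow y$, whose standard set of heaps is $\{h\mid 1\in\operatorname{dom}(h)\}$. Binary: $n=2$; unary: $n=1$. *)

(* Defs.v *)
From Stdlib Require Import ZArith PArith Arith Lia.
From Stdlib Require Fin.

Record Heap : Type := MkHeap {
  hfun : positive -> option Z;
  hfin : exists N : positive, forall p, (N < p)%positive -> hfun p = None }.

Definition hsub (g h : Heap) : Prop :=
  forall l v, hfun g l = Some v -> hfun h l = Some v.

Definition hdisj (f g : Heap) : Prop :=
  forall l, hfun f l = None \/ hfun g l = None.

Definition hunion (h f g : Heap) : Prop :=
  hdisj f g /\
  forall l, hfun h l = match hfun f l with Some v => Some v | None => hfun g l end.

Lemma hempty_fin : exists N : positive, forall p, (N < p)%positive ->
  (fun _ : positive => @None Z) p = None.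
Proof. exists 1%positive; reflexivity. Qed.

Definition hempty : Heap := MkHeap (fun _ => None) hempty_fin.

Lemma hsing_fin (m : positive) : exists N : positive, forall p, (N < p)%positive ->
  (fun l => if Pos.eqb l m then Some 0%Z else None) p = None.
Proof.
  exists m; intros p Hp; simpl.
  destruct (Pos.eqb p m) eqn:E; [apply Pos.eqb_eq in E; subst; lia | reflexivity].
Qed.

(** [m] : the heap storing 0 at location m and nothing else *)
Definition hsing (m : positive) : Heap :=
  MkHeap (fun l => if Pos.eqb l m then Some 0%Z else None) (hsing_fin m).

Definition HT (n : nat) := Fin.t n -> Heap.
Definition HRel (n : nat) := HT n -> Prop.

Definition upclosed {n} (p : HRel n) : Prop :=
  forall f h, p f -> (forall k, hsub (f k) (h k)) -> p h.

Definition upcl {n} (S : HRel n) : HRel n :=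
  fun h => exists f, S f /\ forall k, hsub (f k) (h k).

Definition hstar {n} (p q : HRel n) : HRel n :=
  fun t => exists f g, p f /\ q g /\ forall k, hunion (t k) (f k) (g k).

Definition Delta (n : nat) (X : Heap -> Prop) : HRel n :=
  fun t => exists f, X f /\ forall k, hsub f (t k).

(** A primitive assertion is given by its standard set of heaps, which may
    depend on the valuation eta of ordinary variables. *)
Definition Var := nat.
Definition AVar := nat.

Inductive assn : Type :=
| APrim : ((Var -> Z) -> Heap -> Prop) -> assn
| AV : AVar -> assn
| AAnd : assn -> assn -> assn
| AOr : assn -> assn -> assn
| AStar : assn -> assn -> assn
| AEx : Var -> assn -> assn.

Definition upd (eta : Var -> Z) (x : Var) (v : Z) : Var -> Z :=
  fun y => if Nat.eqb y x then v else eta y.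

Fixpoint sem (n : nat) (eta : Var -> Z) (rho : AVar -> HRel n) (A : assn) : HRel n :=
  match A with
  | APrim P => Delta n (P eta)
  | AV a => rho a
  | AAnd A B => fun t => sem n eta rho A t /\ sem n eta rho B t
  | AOr A B => fun t => sem n eta rho A t \/ sem n eta rho B t
  | AStar A B => hstar (sem n eta rho A) (sem n eta rho B)
  | AEx x A => fun t => exists v : Z, sem n (upd eta x v) rho A t
  end.

Definition pts1 (y : Var) : assn :=
  APrim (fun eta h => hfun h 1%positive = Some (eta y)).

Definition pts1_ : assn := AEx 0 (pts1 0).

Definition pair2 (h1 h2 : Heap) : HT 2 :=
  fun k => if Nat.eqb (proj1_sig (Fin.to_nat k)) 0 then h1 else h2.
Definition single1 (h : Heap) : HT 1 := fun _ => h.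

Definition LHS (a b : AVar) : assn := AAnd pts1_ (AStar (AV a) (AV b)).
Definition RHS1 (a : AVar) : assn := AStar pts1_ (AV a).
Definition RHS (a b : AVar) : assn := AOr (RHS1 a) (RHS1 b).

(* Main.v *)
Require Import Defs.
From Stdlib Require Import ZArith PArith.

Lemma fin1 (k : Fin.t 1) : k = Fin.F1.
Proof.
  refine (Fin.caseS' k (fun k => k = Fin.F1) eq_refl _).
  intro p; apply (Fin.case0 (fun p => Fin.FS p = Fin.F1) p).
Qed.

Lemma hunion_comm h f g : hunion h f g -> hunion h g f.
Proof.
  intros [Hd Hu]; split.
  - intro l; destruct (Hd l); auto.
  - intro l; rewrite Hu; destruct (Hd l) as [E|E]; rewrite E;
      destruct (hfun g l), (hfun f l); congruence.
Qed.

Lemma hsub_refl h : hsub h h.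
Proof. intros l v H; exact H. Qed.

Lemma hunion_l m : hunion (hsing m) (hsing m) hempty.
Proof. split; [intro l; right; reflexivity| intro l; simpl; destruct (Pos.eqb l m); reflexivity]. Qed.

Lemma hunion_r m : hunion (hsing m) hempty (hsing m).
Proof. split; [intro l; left; reflexivity| intro l; reflexivity]. Qed.

Theorem mainTheorem16 (a b : AVar) (hab : a <> b) :
  (* unary interpretation: the implication holds *)
  (forall (eta : Var -> Z) (rho : AVar -> HRel 1),
      (forall c, upclosed (rho c)) ->
      forall t, sem 1 eta rho (LHS a b) t -> sem 1 eta rho (RHS a b) t)
  /\
  (* binary interpretation: the counterexample *)
  (forall (eta : Var -> Z) (rho : AVar -> HRel 2),
      (forall c, upclosed (rho c)) ->
      (forall t, rho a t <-> upcl (fun s => s = pair2 (hsing 1) hempty) t) ->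
      (forall t, rho b t <-> upcl (fun s => s = pair2 hempty (hsing 1)) t) ->
      sem 2 eta rho (LHS a b) (pair2 (hsing 1) (hsing 1))
      /\ (forall t, ~ sem 2 eta rho (RHS1 a) t)
      /\ (forall t, ~ sem 2 eta rho (RHS1 b) t)).
Proof.
  split.
  - intros eta rho _ t [[v [f0 [Hf0 Hsub]]] [f [g [Ha [Hb Hu]]]]].
    simpl in Hf0. unfold upd in Hf0; simpl in Hf0.
    pose proof (Hsub Fin.F1 _ _ Hf0) as Ht.
    destruct (Hu Fin.F1) as [Hd Heq].
    destruct (hfun (f Fin.F1) 1%positive) as [w|] eqn:E.
    + right. exists f, g. split; [|split; assumption].
      exists w, (f Fin.F1). split.
      * simpl. unfold upd; simpl. exact E.
      * intro k; rewrite (fin1 k); apply hsub_refl.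
    + left. exists g, f. split; [|split; [assumption|intro k; apply hunion_comm, Hu]].
      rewrite Heq, E in Ht.
      exists v, (g Fin.F1). split.
      * simpl. unfold upd; simpl. exact Ht.
      * intro k; rewrite (fin1 k); apply hsub_refl.
  - intros eta rho _ Ha Hb. split; [|split].
    + split.
      * exists 0%Z, (hsing 1). split; [reflexivity|].
        intro k; unfold pair2; destruct (Nat.eqb _ _); apply hsub_refl.
      * exists (pair2 (hsing 1) hempty), (pair2 hempty (hsing 1)).
        split; [apply Ha; eexists; split; [reflexivity|intro; apply hsub_refl]|].
        split; [apply Hb; eexists; split; [reflexivity|intro; apply hsub_refl]|].
        intro k; unfold pair2; destruct (Nat.eqb _ _); [apply hunion_l|apply hunion_r].
    + intros t [X [Y [[v [f0 [Hf0 Hsub]]] [HY Hu]]]].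
      apply Ha in HY. destruct HY as [s [-> Hs]].
      simpl in Hf0.
      pose proof (Hsub Fin.F1 _ _ Hf0) as H1.
      assert (H2 : hfun (Y Fin.F1) 1%positive = Some 0%Z) by (apply (Hs Fin.F1); reflexivity).
      destruct (Hu Fin.F1) as [Hd _]. destruct (Hd 1%positive); congruence.
    + intros t [X [Y [[v [f0 [Hf0 Hsub]]] [HY Hu]]]].
      apply Hb in HY. destruct HY as [s [-> Hs]].
      simpl in Hf0.
      pose proof (Hsub (Fin.FS Fin.F1) _ _ Hf0) as H1.
      assert (H2 : hfun (Y (Fin.FS Fin.F1)) 1%positive = Some 0%Z) by (apply (Hs (Fin.FS Fin.F1)); reflexivity).
      destruct (Hu (Fin.FS Fin.F1)) as [Hd _]. destruct (Hd 1%positive); congruence.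
Qed.
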